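(* Let $L$ be a factorial R-lattice of type I admitting a regular equivalence relation $\sim$. Then every element of $L$ is the supremum of a family of mutually orthogonal minimal elements.
   Context: Orthocomplemented lattice (paper's convention): a set $L$ with a partial order $\le$ in which every subset has a supremum and an infimum ($l\vee l'$, $l\wedge l'$ denote binary sup/inf, $0=\inf L$, $1=\sup L$), such that: (continuity) for every increasing net $(l_i)$ and every $l$, $\bigvee_i(l\wedge l_i)=l\wedge\bigvee_i l_i$, and for every decreasing net $(l_i)$ and every $l$, $\bigwedge_i(l\vee l_i)=l\vee\bigwedge_i l_i$; (modularity) $l\le l''$ implies $(l\vee l')\wedge l''=l\vee(l'\wedge l'')$ for all $l'$; together with a map $l\mapsto l^\perp$, also written $1-l$, satisfying $l^{\perp\perp}=l$, $l\vee l^\perp=1$, $l\wedge l^\perp=0$, and $l\le l'\Rightarrow l'^\perp\le l^\perp$. For $l'\le l$ put $l-l'=(1-l')\wedge l$. Write $\perp(l)=\{l'\in L: l'\le 1-l\}$; elements of $\perp(l)$ are orthogonal to $l$; a family is mutually orthogonal if any two distinct members are orthogonal. $l$ commutes with $l'$ if $l=(l\wedge l')\vee(l\wedge l'^\perp)$; $c(l)$ is the set of elements commuting with $l$; $C(L)=\bigcap_{l\in L}c(l)$. $L$ is factorial if $C(L)=\{0,1\}$ and abelian if $C(L)=L$. For $l\in L$, $L\wedge l=\{l'\in L:l'\le l\}$ is an orthocomplemented lattice with complement $l'\mapsto l-l'$; $l$ is an abelian element if $L\wedge l$ is abelian. A factorial lattice is of type I if it has at least one nonzero abelian element. $L$ is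 an R-lattice if $C(L\wedge l)=\{c\wedge l: c\in C(L)\}$ for every $l\in L$. An element $l\ne 0$ is minimal if for every $l'\in L$ either $l\wedge l'=0$ or $l\wedge l'=l$; $Min(L)$ is the set of minimal elements and $Min(l)=\{m\in Min(L): m\le l\}$. The supremum of the empty family is $0$. Regular equivalence relation: for an equivalence relation $\sim$ on $L$ write $l\le_\sim l'$ if there is $l''\le l'$ with $l\sim l''$. $\sim$ is regular if: (1) $l\sim 0\iff l=0$; (2) $l\ge l'$ and $l\le_\sim l'$ imply $l\sim l'$; (3) for all $l,l'$, $l\le_\sim l'$ or $l'\le_\sim l$; (4) if $(l_i)$, $(l_i')$ are families of mutually orthogonal elements with $l_i\sim l_i'$ for all $i$, then $\bigvee_i l_i\sim\bigvee_i l_i'$; (5) $l'\le l$ and $l'\sim l$ imply $l'=l$. *)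

(* Defs.v *)
From Stdlib Require Import Classical.

Set Implicit Arguments.

Definition range {T I : Type} (f : I -> T) : T -> Prop :=
  fun x => exists i, f i = x.

(* An orthocomplemented lattice in the paper's convention:
   complete, continuous (for increasing/decreasing nets), modular,
   with an orthocomplementation. *)
Record OrthoLattice := {
  car :> Type;
  le : car -> car -> Prop;
  le_refl : forall x, le x x;
  le_trans : forall x y z, le x y -> le y z -> le x z;
  le_antisym : forall x y, le x y -> le y x -> x = y;
  sup : (car -> Prop) -> car;
  sup_ub : forall (S : car -> Prop) x, S x -> le x (sup S);
  sup_least : forall (S : car -> Prop) u, (forall x, S x -> le x u) -> le (sup S) u;
  inf : (car -> Prop) -> car;
  inf_lb : forall (S : car -> Prop) x, S x -> le (inf S) x;
  inf_greatest : forall (S : car -> Prop) u, (forall x, S x -> le u x) -> le u (inf S);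
  perp : car -> car;
  cont_incr : forall (I : Type) (r : I -> I -> Prop),
      (forall i, r i i) -> (forall i j k, r i j -> r j k -> r i k) ->
      (forall i j, exists k, r i k /\ r j k) ->
      forall f : I -> car, (forall i j, r i j -> le (f i) (f j)) ->
      forall l,
        sup (range (fun i => inf (fun x => x = l \/ x = f i))) =
        inf (fun x => x = l \/ x = sup (range f));
  cont_decr : forall (I : Type) (r : I -> I -> Prop),
      (forall i, r i i) -> (forall i j k, r i j -> r j k -> r i k) ->
      (forall i j, exists k, r i k /\ r j k) ->
      forall f : I -> car, (forall i j, r i j -> le (f j) (f i)) ->
      forall l,
        inf (range (fun i => sup (fun x => x = l \/ x = f i))) =
        sup (fun x => x = l \/ x = inf (range f));
  modular : forall a b c, le a c ->
      inf (fun x => x = sup (fun y => y = a \/ y = b) \/ x = c) =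
      sup (fun x => x = a \/ x = inf (fun y => y = b \/ y = c));
  perp_invol : forall x, perp (perp x) = x;
  perp_join : forall x, sup (fun y => y = x \/ y = perp x) = sup (fun _ => True);
  perp_meet : forall x, inf (fun y => y = x \/ y = perp x) = inf (fun _ => True);
  perp_anti : forall x y, le x y -> le (perp y) (perp x)
}.

Arguments le {o} _ _.
Arguments sup {o} _.
Arguments inf {o} _.
Arguments perp {o} _.

Section Notions.
Variable L : OrthoLattice.

Definition join (a b : L) : L := sup (fun x => x = a \/ x = b).
Definition meet (a b : L) : L := inf (fun x => x = a \/ x = b).
Definition bot : L := inf (fun _ => True).
Definition top : L := sup (fun _ => True).
Definition supF {I : Type} (f : I -> L) : L := sup (range f).

Definition ominus (l l' : L) : L := meet (perp l') l.

Definition orth (l l' : L) : Prop := le l' (perp l).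

Definition mutually_orth {I : Type} (f : I -> L) : Prop :=
  forall i j, i <> j -> orth (f i) (f j).

Definition commutes (l l' : L) : Prop :=
  l = join (meet l l') (meet l (perp l')).

Definition central (c : L) : Prop := forall l, commutes c l.

Definition factorial : Prop := forall c, central c -> c = bot \/ c = top.

(* Commutation inside L /\ l (same meets/joins, complement x |-> l - x) *)
Definition commutes_in (l a b : L) : Prop :=
  a = join (meet a b) (meet a (ominus l b)).

Definition central_in (l x : L) : Prop :=
  le x l /\ forall y, le y l -> commutes_in l x y.

Definition abelian_elt (l : L) : Prop :=
  forall a b, le a l -> le b l -> commutes_in l a b.

Definition type_I : Prop := factorial /\ exists l, l <> bot /\ abelian_elt l.

Definition R_lattice : Prop :=
  forall l x, central_in l x <-> exists c, central c /\ x = meet c l.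

Definition minimal (l : L) : Prop :=
  l <> bot /\ forall l', meet l l' = bot \/ meet l l' = l.

Definition le_sim (sim : L -> L -> Prop) (l l' : L) : Prop :=
  exists l'', le l'' l' /\ sim l l''.

Definition regular (sim : L -> L -> Prop) : Prop :=
  (forall x, sim x x) /\ (forall x y, sim x y -> sim y x) /\
  (forall x y z, sim x y -> sim y z -> sim x z) /\
  (forall l, sim l bot <-> l = bot) /\
  (forall l l', le l' l -> le_sim sim l l' -> sim l l') /\
  (forall l l', le_sim sim l l' \/ le_sim sim l' l) /\
  (forall (I : Type) (f g : I -> L), mutually_orth f -> mutually_orth g ->
      (forall i, sim (f i) (g i)) -> sim (supF f) (supF g)) /\
  (forall l l', le l' l -> sim l' l -> l' = l).

End Notions.

(* Main.v *)
Require Import Defs.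
From Stdlib Require Import Classical ClassicalEpsilon FunctionalExtensionality PropExtensionality ProofIrrelevance.

Definition incl {U : Type} (A B : U -> Prop) := forall u, A u -> B u.
Definition chainF {U : Type} (C : (U->Prop)->Prop) :=
  forall A B, C A -> C B -> incl A B \/ incl B A.
Definition bigU {U : Type} (C : (U->Prop)->Prop) : U -> Prop :=
  fun u => exists A, C A /\ A u.
Definition closedQ {U : Type} (g : (U->Prop)->(U->Prop)) (Q : (U->Prop)->Prop) :=
  (forall S, Q S -> Q (g S)) /\
  (forall C, (forall A, C A -> Q A) -> chainF C -> Q (bigU C)).
Definition tower {U : Type} (g : (U->Prop)->(U->Prop)) (S : U -> Prop) :=
  forall Q, closedQ g Q -> Q S.

Lemma tower_closed {U : Type} (g : (U->Prop)->(U->Prop)) : closedQ g (tower g).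
Proof.
  split.
  - intros S HS Q HQ. apply (proj1 HQ). apply HS; auto.
  - intros C HC Hch Q HQ. apply (proj2 HQ); auto. intros A HA; apply HC; auto.
Qed.

Lemma tower_ind {U : Type} (g : (U->Prop)->(U->Prop)) (Q : (U->Prop)->Prop) :
  closedQ g (fun S => tower g S /\ Q S) -> forall S, tower g S -> Q S.
Proof. intros H S HS. exact (proj2 (HS _ H)). Qed.

Lemma incl_eq {U : Type} (A B : U -> Prop) : incl A B -> incl B A -> A = B.
Proof.
  intros H1 H2. apply functional_extensionality; intro u.
  apply propositional_extensionality; split; auto.
Qed.

Section Tw.
Context {U : Type} (g : (U->Prop)->(U->Prop)) (g_ext : forall S, incl S (g S)).

Definition pivot (c : U -> Prop) :=
  forall x, tower g x -> incl x c -> ~ incl c x -> incl (g x) c.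

Lemma lemma1 c : tower g c -> pivot c -> forall x, tower g x -> incl x c \/ incl (g c) x.
Proof.
  intros Tc Pc. apply tower_ind. split.
  - intros x [Tx Qx]. split. apply (proj1 (tower_closed g)); auto.
    destruct Qx as [Hxc | Hgx].
    + destruct (classic (incl c x)) as [Hcx | Hcx].
      * rewrite (incl_eq _ _ Hxc Hcx). right; intros u Hu; auto.
      * left. apply Pc; auto.
    + right. intros u Hu. apply g_ext. auto.
  - intros C HC Hch. split.
    + apply (proj2 (tower_closed g)); auto. intros A HA; apply HC; auto.
    + destruct (classic (exists A, C A /\ incl (g c) A)) as [[A [HA Hi]] | Hn].
      * right. intros u Hu. exists A; auto.
      * left. intros u [A [HA Hu]]. destruct (proj2 (HC A HA)) as [H|H].
        -- auto.
        -- exfalso; apply Hn; eauto.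
Qed.

Lemma lemma2 : forall c, tower g c -> pivot c.
Proof.
  apply tower_ind. split.
  - intros c [Tc Pc]. split. apply (proj1 (tower_closed g)); auto.
    intros x Tx Hx Hnx. destruct (lemma1 c Tc Pc x Tx) as [Hxc | Hgx].
    + destruct (classic (incl c x)) as [Hcx | Hcx].
      * rewrite (incl_eq _ _ Hxc Hcx). intros u Hu; auto.
      * intros u Hu. apply g_ext. apply (Pc x Tx Hxc Hcx); auto.
    + contradiction.
  - intros C HC Hch. split.
    + apply (proj2 (tower_closed g)); auto. intros A HA; apply HC; auto.
    + intros x Tx Hx Hnx.
      destruct (not_all_ex_not _ _ Hnx) as [u Hu].
      apply imply_to_and in Hu. destruct Hu as [[A [HA HAu]] Hxu].
      destruct (HC A HA) as [TA PA].
      destruct (lemma1 A TA PA x Tx) as [HxA | HgA].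
      * intros v Hv. exists A. split; auto.
        exact (PA x Tx HxA (fun H => Hxu (H u HAu)) v Hv).
      * exfalso. apply Hxu. apply HgA. apply g_ext. auto.
Qed.

Lemma tower_chain : chainF (tower g).
Proof.
  intros x y Tx Ty. destruct (lemma1 y Ty (lemma2 y Ty) x Tx) as [H|H]; auto.
  right. intros u Hu. apply H. apply g_ext. auto.
Qed.

Lemma tower_fix : exists W, tower g W /\ incl (g W) W.
Proof.
  exists (bigU (tower g)).
  assert (TW : tower g (bigU (tower g))).
  { apply (proj2 (tower_closed g)); auto. apply tower_chain. }
  split; auto. intros u Hu. exists (g (bigU (tower g))). split; auto.
  apply (proj1 (tower_closed g)); auto.
Qed.
End Tw.

Lemma zorn {U : Type} (F : (U->Prop)->Prop) :
  (forall C, (forall A, C A -> F A) -> chainF C -> F (bigU C)) ->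
  exists M, F M /\ forall S, F S -> incl M S -> incl S M.
Proof.
  intros Hc. apply NNPP; intro Hno.
  assert (Hg : forall S : U -> Prop, exists S',
     (F S -> F S' /\ ~ incl S' S) /\ incl S S').
  { intro S. destruct (classic (F S)) as [FS | nFS].
    - destruct (classic (exists S', F S' /\ incl S S' /\ ~ incl S' S)) as [[S' [H1 [H2 H3]]] | Hn].
      + exists S'; auto.
      + exfalso. apply Hno. exists S. split; auto. intros S' FS' Hi.
        apply NNPP. intro H. apply Hn. exists S'; auto.
    - exists S. split. intro; contradiction. intros u Hu; auto. }
  pose (g := fun S => proj1_sig (constructive_indefinite_description _ (Hg S))).
  assert (Hgp : forall S, (F S -> F (g S) /\ ~ incl (g S) S) /\ incl S (g S)).
  { intro S. exact (proj2_sig (constructive_indefinite_description _ (Hg S))). }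
  assert (gext : forall S, incl S (g S)) by (intro S; apply Hgp).
  destruct (tower_fix g gext) as [W [TW HW]].
  assert (TF : forall S, tower g S -> F S).
  { apply tower_ind. split.
    - intros S [TS FS]. split. apply (proj1 (tower_closed g)); auto. apply Hgp; auto.
    - intros C HC Hch. split. apply (proj2 (tower_closed g)); auto.
      intros A HA; apply HC; auto. apply Hc; auto. intros A HA; apply HC; auto. }
  apply (proj2 (proj1 (Hgp W) (TF W TW))). exact HW.
Qed.

Section Lat.
Context {L : OrthoLattice}.

Lemma meet_lb1 (a b : L) : le (meet _ a b) a.
Proof. unfold meet. apply inf_lb. auto. Qed.
Lemma meet_lb2 (a b : L) : le (meet _ a b) b.
Proof. unfold meet. apply inf_lb. auto. Qed.
Lemma meet_glb (a b z : L) : le z a -> le z b -> le z (meet _ a b).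
Proof. intros. unfold meet. apply inf_greatest. intros x [-> | ->]; auto. Qed.
Lemma join_ub1 (a b : L) : le a (join _ a b).
Proof. unfold join. apply sup_ub. auto. Qed.
Lemma join_ub2 (a b : L) : le b (join _ a b).
Proof. unfold join. apply sup_ub. auto. Qed.
Lemma join_lub (a b z : L) : le a z -> le b z -> le (join _ a b) z.
Proof. intros. unfold join. apply sup_least. intros x [-> | ->]; auto. Qed.
Lemma bot_le (x : L) : le (bot L) x.
Proof. unfold bot. apply inf_lb. exact I. Qed.
Lemma le_top (x : L) : le x (top L).
Proof. unfold top. apply sup_ub. exact I. Qed.
Lemma le_bot (x : L) : le x (bot L) -> x = bot L.
Proof. intro H. apply le_antisym; auto. apply bot_le. Qed.
Lemma meet_sub (a u : L) : le u a -> meet _ a u = u.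
Proof. intro H. apply le_antisym. apply meet_lb2. apply meet_glb; auto. apply le_refl. Qed.
Lemma meet_perp (x : L) : meet _ x (perp x) = bot L.
Proof. unfold meet, bot. apply perp_meet. Qed.
Lemma join_perp (x : L) : join _ x (perp x) = top L.
Proof. unfold join, top. apply perp_join. Qed.
Lemma modular' (a b c : L) : le a c -> meet _ (join _ a b) c = join _ a (meet _ b c).
Proof. intro H. unfold meet, join. apply modular; auto. Qed.
Lemma perp_swap (a b : L) : le a (perp b) -> le b (perp a).
Proof. intro H. apply perp_anti in H. rewrite perp_invol in H. auto. Qed.
End Lat.

Lemma abelian_minimal (L : OrthoLattice) :
  factorial L -> R_lattice L -> forall a : L, a <> bot L -> abelian_elt _ a -> minimal _ a.
Proof.
  intros Hf HR a Ha Hab. split; auto. intro l'.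
  assert (Hc : central_in _ a (meet _ a l')).
  { split. apply meet_lb1. intros y Hy. apply Hab; auto. apply meet_lb1. }
  destruct (proj1 (HR a _) Hc) as [c [Hcc Heq]]. rewrite Heq.
  destruct (Hf c Hcc) as [-> | ->].
  - left. apply le_bot. apply meet_lb1.
  - right. apply le_antisym. apply meet_lb2. apply meet_glb. apply le_top. apply le_refl.
Qed.

Theorem mainTheorem8 (L : OrthoLattice) (sim : L -> L -> Prop) :
  factorial L -> R_lattice L -> type_I L -> @regular L sim ->
  forall l : L, exists (I : Type) (m : I -> L),
    (forall i, @minimal L (m i)) /\ @mutually_orth L I m /\ l = @supF L I m.
Proof.
  intros Hf HR [_ [a [Ha Hab]]] Hreg l.
  destruct Hreg as [Srefl [Ssym [Strans [Sbot [S2 [S3 [S4 S5]]]]]]].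
  assert (Ma : minimal _ a) by (apply abelian_minimal; auto).
  assert (Msub : forall u, le u a -> u = bot L \/ u = a).
  { intros u Hu. destruct (proj2 Ma u) as [H|H]; rewrite meet_sub in H; auto. }
  assert (Tr : forall y, sim y a -> minimal _ y).
  { intros y Hy. assert (Hyb : y <> bot L).
    { intro E. subst y. apply Ha. apply Sbot. apply Ssym. auto. }
    split; auto. intro l'. set (z := meet _ y l').
    assert (Hzy : le z y) by apply meet_lb1.
    apply NNPP. intro Hn. apply not_or_and in Hn. destruct Hn as [Hz0 Hzy'].
    destruct (S3 z a) as [[u [Hu Hzu]] | [w [Hw Haw]]].
    - destruct (Msub u Hu) as [-> | ->].
      + apply Hz0. apply Sbot. auto.
      + apply Hzy'. apply S5; auto. eapply Strans; eauto.
    - assert (Hwy : w = y).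
      { apply S5. eapply le_trans; eauto. apply Ssym. eapply Strans; eauto. }
      subst w. apply Hzy'. apply le_antisym; auto. }
  assert (At : forall x, x <> bot L -> exists b, minimal _ b /\ le b x).
  { intros x Hx. destruct (S3 x a) as [[u [Hu Hxu]] | [w [Hw Haw]]].
    - destruct (Msub u Hu) as [-> | ->].
      + exfalso. apply Hx. apply Sbot. auto.
      + exists x. split. apply Tr; auto. apply le_refl.
    - exists w. split; [apply Tr; apply Ssym; auto | auto]. }
  set (F := fun S : L -> Prop => (forall x, S x -> minimal _ x /\ le x l) /\
              (forall x y, S x -> S y -> x <> y -> orth _ x y)).
  destruct (@zorn L F) as [M [[HM1 HM2] Hmax]].
  { intros C HC Hch. split.
    - intros x [A [HA Hx]]. apply (proj1 (HC A HA)); auto.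
    - intros x y [A [HA Hx]] [B [HB Hy]] Hxy.
      destruct (Hch A B HA HB) as [H|H].
      + apply (proj2 (HC B HB)); auto.
      + apply (proj2 (HC A HA)); auto. }
  exists {x : L | M x}. exists (fun i => proj1_sig i).
  split; [|split].
  - intros [x Hx]. apply HM1; auto.
  - intros [x Hx] [y Hy] Hne. simpl. apply HM2; auto.
    intro E. subst y. apply Hne. f_equal. apply proof_irrelevance.
  - set (s := supF _ (fun i : {x : L | M x} => proj1_sig i)).
    assert (Hxs : forall x, M x -> le x s).
    { intros x Hx. unfold s, supF. apply sup_ub. exists (exist _ x Hx). auto. }
    assert (Hsl : le s l).
    { unfold s, supF. apply sup_least. intros x [[y Hy] <-]. apply HM1; auto. }
    set (d := meet _ (perp s) l).
    destruct (classic (d = bot L)) as [Hd | Hd].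
    + pose proof (modular' s (perp s) l Hsl) as Hm.
      rewrite join_perp in Hm. fold d in Hm. rewrite Hd in Hm.
      apply le_antisym; auto.
      eapply le_trans. 2: { apply join_lub. apply le_refl. apply bot_le. }
      rewrite <- Hm. apply meet_glb. apply le_top. apply le_refl.
    + exfalso. destruct (At d Hd) as [b [Hb Hbd]].
      assert (Hbp : le b (perp s)) by (eapply le_trans; [exact Hbd | apply meet_lb1]).
      assert (Hbl : le b l) by (eapply le_trans; [exact Hbd | apply meet_lb2]).
      assert (HnM : ~ M b).
      { intro Hb'. apply (proj1 Hb). apply le_bot. rewrite <- (meet_perp s).
        apply meet_glb; auto. }
      assert (Hbo : forall x, M x -> le b (perp x)).
      { intros x Hx. eapply le_trans; [exact Hbp | apply perp_anti; auto]. }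
      assert (FS : F (fun x => M x \/ x = b)).
      { split.
        - intros x [Hx | ->]; auto.
        - intros x y [Hx | ->] [Hy | ->] Hxy; unfold orth.
          + apply HM2; auto.
          + apply Hbo; auto.
          + apply perp_swap. apply Hbo; auto.
          + congruence. }
      apply HnM. apply (Hmax _ FS (fun u Hu => or_introl Hu)). right; reflexivity.
Qed.
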